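(* Let $n>2$, $V=\mathbb{F}_2^n$ with canonical basis $e_1,\dots,e_n$, and let $W=\langle e_3,\dots,e_n\rangle$. For $b\in W\setminus\{0\}$ define $\pi_b,\varepsilon_b\in\mathrm{Sym}(V)$ by $$x\pi_b=x+x^{(2)}b+e_1,\qquad x\varepsilon_b=x+x^{(1)}b+e_2,$$ and let $T_b=\langle \pi_b,\varepsilon_b,\sigma_{e_i}\mid 3\le i\le n\rangle$. Then the elementary abelian regular subgroups $R$ of $\mathrm{Sym}(V)$ with $T\cap R=\sigma_W$ are exactly the groups $T_b$, $b\in W\setminus\{0\}$, and these are pairwise distinct; in particular there are exactly $2^{n-2}-1$ of them.
   Context: For $v\in V$, $v^{(i)}\in\mathbb{F}_2$ is its $i$-th coordinate. $T=\{\sigma_v:v\in V\}$ with $\sigma_v:x\mapsto x+v$; $\sigma_W=\{\sigma_w:w\in W\}$. Permutations act on the right. *)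

(* Defs.v *)
From HB Require Import structures.
From mathcomp Require Import all_boot all_order all_algebra all_fingroup all_solvable.
Set Implicit Arguments. Unset Strict Implicit. Unset Printing Implicit Defensive.
Import GRing.Theory.
Local Open Scope ring_scope.

Notation V n := 'rV['F_2]_n.

(* x^{(k)} : the k-th coordinate, 1-indexed as in the paper (0 if out of range) *)
Definition coord {n} (x : V n) (k : nat) : 'F_2 :=
  match k with
  | 0 => 0
  | k'.+1 => if (insub k' : option 'I_n) is Some j then x 0 j else 0
  end.

(* e_k : the k-th canonical basis vector, 1-indexed *)
Definition evec n (k : nat) : V n := \row_(j < n) ((j.+1 == k)%N)%:R.

(* W = <e_3, ..., e_n> : the span of the basis vectors e_3..e_n, i.e.
   the vectors whose first two coordinates vanish. *)
Definition Wset n : {set V n} := [set w : V n | (coord w 1 == 0) && (coord w 2 == 0)].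

(* a permutation from a function; the identity if the function is not injective
   (never used in that case) *)
Definition mkperm {T : finType} (f : T -> T) : {perm T} :=
  insubd (1%g : {perm T}) [ffun x => f x].

Definition transl n (v : V n) : {perm V n} := perm (addIr v).

Definition Tgrp n : {set {perm V n}} := [set transl v | v : V n].
Definition sigmaW n : {set {perm V n}} := [set transl w | w in Wset n].

Definition pi_ n (b : V n) : {perm V n} :=
  mkperm (fun x : V n => x + coord x 2 *: b + evec n 1).
Definition eps_ n (b : V n) : {perm V n} :=
  mkperm (fun x : V n => x + coord x 1 *: b + evec n 2).

Definition T_ n (b : V n) : {set {perm V n}} :=
  <<[set pi_ b; eps_ b] :|: [set transl (evec n i.+1) | i : 'I_n & (2 <= i)%N]>>%g.

Definition regular n (R : {set {perm V n}}) : bool :=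
  [transitive R, on [set: V n] | 'P] && [forall x : V n, ('C_R[x | 'P] == 1)%g].

(* Main.v *)
From Pilot Require Import Defs.
From HB Require Import structures.
From mathcomp Require Import all_boot all_order all_algebra all_fingroup all_solvable.
From mathcomp Require Import ring zify.
Import Pilot.Defs.
Set Implicit Arguments. Unset Strict Implicit. Unset Printing Implicit Defensive.
Import GRing.Theory.
Local Open Scope ring_scope.

Lemma F2P (c : 'F_2) : c = 0 \/ c = 1.
Proof. by case: c => [[|[|m]] Hm]; [left|right|]; try apply/val_inj. Qed.

Lemma F2_add_self (c : 'F_2) : c + c = 0.
Proof. by case: (F2P c) => ->; apply/eqP. Qed.

Lemma vaddvv n (v : V n) : v + v = 0.
Proof. by rewrite -mulr2n -scaler_nat (_ : 2%:R = 0 :> 'F_2) ?scale0r //; apply/eqP. Qed.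

Lemma crdD n (x y : V n) k : coord (x + y) k = coord x k + coord y k.
Proof. rewrite /coord; case: k => [|k]; first by rewrite addr0. by case: insubP => [j _ _|_]; rewrite ?mxE ?addr0. Qed.

Lemma crdZ n (a : 'F_2) (x : V n) k : coord (a *: x) k = a * coord x k.
Proof. rewrite /coord; case: k => [|k]; first by rewrite mulr0. by case: insubP => [j _ _|_]; rewrite ?mxE ?mulr0. Qed.

Lemma crd0 n k : coord (0 : V n) k = 0.
Proof. rewrite /coord; case: k => [|k] //. by case: insubP => [j _ _|_]; rewrite ?mxE. Qed.

Lemma coord_evec n i k : (i <= n)%N -> coord (evec n i) k = ((i == k) && (0 < k)%N)%:R.
Proof.
move=> hi; rewrite /coord; case: k => [|k]; first by rewrite andbF.
case: insubP => [j hj <-|]; first by rewrite mxE eq_sym andbT.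
move=> /negP hk; rewrite andbT; case: eqP => //= e; exfalso; apply: hk; lia.
Qed.

Lemma mkperm_ext (T : finType) (f g : T -> T) : f =1 g -> mkperm f = mkperm g.
Proof. by move=> e; rewrite /mkperm; congr insubd; apply/ffunP => x; rewrite !ffunE. Qed.

Lemma mkpermE (T : finType) (f : T -> T) : injective f -> mkperm f =1 f.
Proof.
move=> fi x; rewrite /mkperm.
have h : injectiveb [ffun x => f x].
  by apply/injectiveP => a b; rewrite !ffunE; apply: fi.
rewrite -pvalE insubdK ?ffunE //.
Qed.

Lemma WsetP n (b : V n) : reflect (coord b 1 = 0 /\ coord b 2 = 0) (b \in Wset n).
Proof. by rewrite inE; apply: (iffP andP) => [[/eqP ? /eqP ?]|[-> ->]]. Qed.

Definition cc n (v x : V n) : 'F_2 :=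
  coord v 1 * coord x 2 + coord v 2 * coord x 1 + coord v 1 * coord v 2.
Definition tauf n (b v x : V n) : V n := x + v + cc v x *: b.
Definition tau n (b v : V n) : {perm V n} := mkperm (tauf b v).

Lemma coord_tauf n (b v x : V n) k : b \in Wset n -> (k = 1 \/ k = 2)%N ->
  coord (tauf b v x) k = coord x k + coord v k.
Proof.
move=> /WsetP [h1 h2] hk; rewrite /tauf !crdD crdZ.
by case: hk => ->; rewrite ?h1 ?h2 mulr0 addr0.
Qed.

Lemma tauf_comp n (b u v x : V n) : b \in Wset n ->
  tauf b u (tauf b v x) = tauf b (v + u) x.
Proof.
move=> hb; rewrite {1}/tauf /cc !coord_tauf ?crdD; [|by auto ..].
rewrite /tauf /cc !crdD; apply/rowP => j; rewrite !mxE; ring.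
Qed.

Lemma tauf0 n (b x : V n) : tauf b 0 x = x.
Proof. by rewrite /tauf /cc !crd0 !mul0r !addr0 scale0r addr0. Qed.

Lemma tauf_inj n (b v : V n) : b \in Wset n -> injective (tauf b v).
Proof.
move=> hb; apply: (can_inj (g := tauf b v)) => x.
by rewrite tauf_comp // vaddvv tauf0.
Qed.

Lemma tauE n (b v : V n) : b \in Wset n -> tau b v =1 tauf b v.
Proof. by move=> hb; apply: mkpermE; apply: tauf_inj. Qed.

Lemma tauM n (b u v : V n) : b \in Wset n -> (tau b u * tau b v)%g = tau b (u + v).
Proof. by move=> hb; apply/permP => x; rewrite permM !tauE // tauf_comp // addrC. Qed.

Lemma tau0 n (b : V n) : tau b 0 = 1%g.
Proof. by apply/permP => x; rewrite /tau (mkperm_ext (g := id)) ?mkpermE ?perm1 //; apply: tauf0. Qed.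

Lemma ce11 n : (2 < n)%N -> coord (evec n 1) 1 = 1.
Proof. by move=> hn; rewrite coord_evec //; lia. Qed.
Lemma ce12 n : (2 < n)%N -> coord (evec n 1) 2 = 0.
Proof. by move=> hn; rewrite coord_evec //; lia. Qed.
Lemma ce21 n : (2 < n)%N -> coord (evec n 2) 1 = 0.
Proof. by move=> hn; rewrite coord_evec //; lia. Qed.
Lemma ce22 n : (2 < n)%N -> coord (evec n 2) 2 = 1.
Proof. by move=> hn; rewrite coord_evec //; lia. Qed.

Lemma evecW n (j : 'I_n) : (2 <= j)%N -> evec n j.+1 \in Wset n.
Proof.
move=> hj; apply/WsetP; rewrite !coord_evec ?ltn_ord //.
by split; rewrite (_ : _ && _ = false) //; apply/negbTE/negP; move/andP=>[/eqP ? _]; lia.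
Qed.

Lemma pi_tau n (b : V n) : (2 < n)%N -> pi_ b = tau b (evec n 1).
Proof.
move=> hn; apply: mkperm_ext => x; rewrite /tauf /cc (ce11 hn) (ce12 hn).
by rewrite mul0r mulr0 !addr0 mul1r addrAC.
Qed.

Lemma eps_tau n (b : V n) : (2 < n)%N -> eps_ b = tau b (evec n 2).
Proof.
move=> hn; apply: mkperm_ext => x; rewrite /tauf /cc (ce21 hn) (ce22 hn).
by rewrite !mul0r add0r addr0 mul1r addrAC.
Qed.

Lemma transl_tau n (b w : V n) : b \in Wset n -> w \in Wset n -> transl w = tau b w.
Proof.
move=> hb /WsetP [h1 h2]; apply/permP => x; rewrite tauE // permE /tauf /cc h1 h2.
by rewrite !mul0r !addr0 scale0r addr0.
Qed.

Lemma transl_0 n (w x : V n) : transl w x = x + w.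
Proof. by rewrite permE. Qed.

Lemma vdecomp n (v : V n) : v = \sum_(j < n) v 0 j *: evec n j.+1.
Proof.
apply/rowP => k; rewrite summxE (bigD1 k) //= big1 => [|i ik]; rewrite !mxE.
  by rewrite eqxx mulr1 addr0.
by rewrite eqSS (_ : (k == i :> nat) = false) ?mulr0 //; apply/negbTE; rewrite eq_sym.
Qed.

Definition Sset n (b : V n) : {set {perm V n}} := [set tau b v | v : V n].

Lemma Sgs n (b : V n) : b \in Wset n -> group_set (Sset b).
Proof.
move=> hb; apply/group_setP; split; first by apply/imsetP; exists 0; rewrite ?tau0.
move=> x y /imsetP [u _ ->] /imsetP [v _ ->]; rewrite tauM //; exact: imset_f.
Qed.

Lemma Tb_eq n (b : V n) : (2 < n)%N -> b \in Wset n -> T_ b = Sset b.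
Proof.
move=> hn hb; pose G := Group (Sgs hb).
apply/eqP; rewrite eqEsubset; apply/andP; split.
  rewrite (gen_subG _ G) subUset; apply/andP; split.
    apply/subsetP => g; rewrite !inE => /orP [] /eqP ->; apply/imsetP.
      by exists (evec n 1); rewrite ?pi_tau.
    by exists (evec n 2); rewrite ?eps_tau.
  apply/subsetP => g /imsetP [j]; rewrite inE => hj ->; apply/imsetP.
  by exists (evec n j.+1); rewrite ?(transl_tau hb (evecW hj)).
apply/subsetP => g /imsetP [v _ ->].
rewrite (vdecomp v) (big_morph (tau b) (fun u w => esym (@tauM n b u w hb)) (tau0 b)).
apply: group_prod => j _; case: (F2P (v 0 j)) => ->; first by rewrite scale0r tau0 group1.
rewrite scale1r; apply: mem_gen; rewrite !inE.
case: j => [[|[|j]] hj] /=.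
- by rewrite -pi_tau ?eqxx.
- by rewrite -eps_tau ?eqxx ?orbT.
apply/orP; right; apply/imsetP; exists (Ordinal hj); rewrite ?inE //.
by rewrite (transl_tau hb (evecW (j := Ordinal hj) _)).
Qed.

Lemma F2_10 : (1 : 'F_2) = 0 -> False.
Proof. by move/eqP; rewrite oner_eq0. Qed.
Lemma F2_01 : (0 : 'F_2) = 1 -> False.
Proof. by move/esym/F2_10. Qed.

Ltac f2s := repeat match goal with |- forall _ : _, _ =>
   let c := fresh "c" in let hc := fresh "hc" in move=> c; case: (F2P c) => hc; subst c end;
   rewrite ?(addr0, add0r, mul1r, mulr1, mul0r, mulr0, F2_add_self); intros;
   first [done | exfalso; match goal with
     | h : (1 = 0) |- _ => exact: F2_10 h
     | h : (0 = 1) |- _ => exact: F2_01 h end].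

Lemma tau_at0 n (b v : V n) : b \in Wset n -> tau b v 0 = v + (coord v 1 * coord v 2) *: b.
Proof. by move=> hb; rewrite tauE // /tauf /cc !crd0 !mulr0 !add0r. Qed.

Lemma memTb n (b : V n) g : (2 < n)%N -> b \in Wset n -> g \in T_ b -> exists v, g = tau b v.
Proof. by move=> hn hb; rewrite Tb_eq // => /imsetP [v _ ->]; exists v. Qed.

Lemma tau_memT n (b v : V n) : (2 < n)%N -> b \in Wset n -> tau b v \in T_ b.
Proof. by move=> hn hb; rewrite Tb_eq //; apply: imset_f. Qed.

Lemma Tb_trans n (b : V n) : (2 < n)%N -> b \in Wset n -> [transitive T_ b, on [set: V n] | 'P].
Proof.
move=> hn hb; apply/imsetP; exists 0 => //; apply/setP => x; rewrite inE; symmetry.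
apply/orbitP; exists (tau b (x + (coord x 1 * coord x 2) *: b)); first exact: tau_memT.
have /WsetP [h1 h2] := hb.
change (tau b (x + (coord x 1 * coord x 2) *: b) 0 = x); rewrite tau_at0 // !crdD !crdZ h1 h2 !mulr0 !addr0.
apply/rowP => j; rewrite !mxE; move: (x 0 j) (b 0 j) (coord x 1 * coord x 2); f2s.
Qed.

Lemma Tb_stab n (b x : V n) : (2 < n)%N -> b \in Wset n -> ('C_(T_ b)[x | 'P] == 1)%g.
Proof.
move=> hn hb; have /WsetP [h1 h2] := hb.
apply/eqP/trivgP/subsetP => g; rewrite inE => /andP [hg /astab1P hfix].
change (g x = x) in hfix.
case: (memTb hn hb hg) => v eg; subst g; rewrite inE; apply/eqP.
rewrite tauE // /tauf in hfix.
have e : v = cc v x *: b.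
  apply/rowP => j; move/rowP/(_ j): hfix; rewrite !mxE.
  move: (x 0 j) (v 0 j) (b 0 j) (cc v x); f2s.
have v1 : coord v 1 = 0 by rewrite e crdZ h1 mulr0.
have v2 : coord v 2 = 0 by rewrite e crdZ h2 mulr0.
have c0 : cc v x = 0 by rewrite /cc v1 v2 !mul0r !addr0.
by rewrite e c0 scale0r tau0.
Qed.

Lemma Tb_regular n (b : V n) : (2 < n)%N -> b \in Wset n -> regular (T_ b).
Proof.
move=> hn hb; apply/andP; split; first exact: Tb_trans.
by apply/forallP => x; apply: Tb_stab.
Qed.

Lemma Tb_abelem n (b : V n) : (2 < n)%N -> b \in Wset n -> (2.-abelem (T_ b))%g.
Proof.
move=> hn hb; apply/abelemP => //; split.
  apply/centsP => g hg h hh.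
  case: (memTb hn hb hg) => u ->; case: (memTb hn hb hh) => v ->.
  by rewrite /commute !tauM // addrC.
move=> g hg; case: (memTb hn hb hg) => u ->.
by rewrite expgS expg1 tauM // vaddvv tau0.
Qed.

Lemma aux1 n (e u v b : V n) (c0 c1 : 'F_2) :
  u = 0 + v + c0 *: b -> e + u = e + v + c1 *: b -> (c1 + c0) *: b = 0.
Proof.
move=> h0 h1; apply/rowP => j; move/rowP/(_ j): h0; move/rowP/(_ j): h1; rewrite !mxE.
move: (e 0 j) (u 0 j) (v 0 j) (b 0 j) c0 c1; f2s.
Qed.

Lemma Tb_int n (b : V n) : (2 < n)%N -> b \in Wset n :\ 0 -> Tgrp n :&: T_ b == sigmaW n.
Proof.
move=> hn; rewrite in_setD1 => /andP [bn0 hb].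
have /WsetP [h1 h2] := hb.
rewrite eqEsubset; apply/andP; split; apply/subsetP => g; last first.
  case/imsetP => w hw ->; rewrite inE; apply/andP; split; first exact: imset_f.
  by rewrite (transl_tau hb hw) tau_memT.
rewrite inE => /andP [/imsetP [u _ ->] hg].
case: (memTb hn hb hg) => v ev.
have e0 : u = tau b v 0 by rewrite -ev transl_0 add0r.
have ee1 : evec n 1 + u = tau b v (evec n 1) by rewrite -ev transl_0 addrC.
have ee2 : evec n 2 + u = tau b v (evec n 2) by rewrite -ev transl_0 addrC.
rewrite !tauE // /tauf in e0 ee1 ee2.
have k1 := aux1 e0 ee1; have k2 := aux1 e0 ee2.
rewrite /cc !crd0 (ce11 hn) (ce12 hn) (ce21 hn) (ce22 hn) in k1 k2.
have v2 : coord v 2 = 0.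
  move/eqP: k1; rewrite scalemx_eq0 (negbTE bn0) orbF => /eqP.
  by move: (coord v 1) (coord v 2); f2s.
have v1 : coord v 1 = 0.
  move/eqP: k2; rewrite scalemx_eq0 (negbTE bn0) orbF => /eqP.
  by move: (coord v 1) (coord v 2); f2s.
rewrite /cc crd0 v1 v2 !mul0r !addr0 scale0r addr0 add0r in e0; subst u.
apply/imsetP; exists v => //; exact/WsetP.
Qed.

Lemma card_reg n (R : {group {perm V n}}) : regular R -> #|R| = #|V n|.
Proof.
case/andP => htr /forallP /(_ 0) /eqP hst.
rewrite -(card_orbit_stab 'P R 0) hst cards1 muln1 (atransP htr) ?inE //.
by rewrite cardsT.
Qed.

Lemma xpW n (x : V n) : (2 < n)%N ->
  x + (coord x 1 *: evec n 1 + coord x 2 *: evec n 2) \in Wset n.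
Proof.
move=> hn; apply/WsetP; rewrite !crdD !crdZ (ce11 hn) (ce12 hn) (ce21 hn) (ce22 hn).
by split; move: (coord x 1) (coord x 2); f2s.
Qed.

Lemma xdec n (x p : V n) : x = p + (x + p).
Proof. by rewrite addrCA vaddvv addr0. Qed.

Lemma crd_contra n (a b : V n) k : a = b -> coord a k = 1 -> coord b k = 0 -> False.
Proof. by move=> -> ->; apply: F2_10. Qed.

Lemma forward n (R : {group {perm V n}}) : (2 < n)%N ->
  [&& 2.-abelem R, regular R & Tgrp n :&: R == sigmaW n]%g ->
  exists2 b : V n, b \in Wset n :\ 0%R & R :=: T_ b.
Proof.
move=> hn /and3P [hab hreg /eqP hT].
have [habel hexp] := abelemP (isT : prime 2) hab.
have htr := hreg; case/andP: htr => htr _.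
have comm : forall g h, g \in R -> h \in R -> (g * h = h * g)%g.
  by move=> g h hg hh; apply: (centsP habel).
have invo : forall g x, g \in R -> g (g x) = x.
  move=> g x hg; have := hexp g hg; rewrite expgS expg1 => e.
  by rewrite -permM e perm1.
have sW : forall w, w \in Wset n -> transl w \in R.
  move=> w hw; have : transl w \in sigmaW n by apply: imset_f.
  by rewrite -hT inE => /andP [_ ->].
have shift : forall g x w, g \in R -> w \in Wset n -> g (x + w) = g x + w.
  move=> g x w hg hw; have := permM (transl w) g x.
  by rewrite comm ?sW // permM !transl_0 => ->.
move E1: (evec n 1) => e1; move E2: (evec n 2) => e2.
have [r1 hr1 e1r] : exists2 r1, r1 \in R & e1 = r1 0.
  by case: (atransP2 htr (in_setT 0) (in_setT e1)) => a ha ->; exists a.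
have [r2 hr2 e2r] : exists2 r2, r2 \in R & e2 = r2 0.
  by case: (atransP2 htr (in_setT 0) (in_setT e2)) => a ha ->; exists a.
have r1e1 : r1 e1 = 0 by rewrite e1r invo.
have r2e2 : r2 e2 = 0 by rewrite e2r invo.
have r21 : r2 e1 = r1 e2 by rewrite e1r e2r -!permM comm.
move Ey: (r1 e2) => y.
have Wc : forall w, coord w 1 = 0 -> coord w 2 = 0 -> w \in Wset n by move=> w *; apply/WsetP.
have c11 : coord e1 1 = 1 by rewrite -E1 ce11.
have c12 : coord e1 2 = 0 by rewrite -E1 ce12.
have c21 : coord e2 1 = 0 by rewrite -E2 ce21.
have c22 : coord e2 2 = 1 by rewrite -E2 ce22.
have [y1 y2] : coord y 1 = 1 /\ coord y 2 = 1.
  case: (F2P (coord y 1)) => hy1; case: (F2P (coord y 2)) => hy2 //.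
  - exfalso; have hw : y \in Wset n by apply: Wc.
    have hry : r1 y = e2 by rewrite -Ey invo.
    have := shift r1 0 y hr1 hw; rewrite add0r -e1r hry => e.
    apply: (crd_contra (k := 1) (esym e)); rewrite ?crdD ?c11 ?c21 ?hy1 ?addr0 //.
  - exfalso; have hw : y + e2 \in Wset n by apply: Wc; rewrite crdD ?c21 ?c22 ?hy1 ?hy2; f2s.
    have hry : r2 y = e1 by rewrite -Ey -r21 invo.
    have := shift r2 e2 _ hr2 hw; rewrite -xdec r2e2 add0r hry => e.
    apply: (crd_contra (k := 1) e); rewrite ?crdD ?c11 ?c21 ?hy1 ?addr0 //.
  - exfalso; have hw : y + e1 \in Wset n by apply: Wc; rewrite crdD ?c11 ?c12 ?hy1 ?hy2; f2s.
    have hry : r1 y = e2 by rewrite -Ey invo.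
    have := shift r1 e1 _ hr1 hw; rewrite -xdec r1e1 add0r hry => e.
    apply: (crd_contra (k := 2) e); rewrite ?crdD ?c12 ?c22 ?hy2 ?addr0 //.
move Ebt: (y + e1 + e2) => bt.
have ey : e1 + e2 + bt = y.
  by rewrite -Ebt; apply/rowP => j; rewrite !mxE; move: (e1 0 j) (e2 0 j) (y 0 j); f2s.
have hbt : bt \in Wset n by rewrite -Ebt; apply: Wc; rewrite !crdD ?y1 ?y2 ?c11 ?c12 ?c21 ?c22; f2s.
have dec : forall g x, g \in R -> g x = g (coord x 1 *: e1 + coord x 2 *: e2) +
                (x + (coord x 1 *: e1 + coord x 2 *: e2)).
  move=> g x hg; rewrite -shift //; first by rewrite -xdec.
  by rewrite -E1 -E2 xpW.
have r1E : r1 = tau bt e1.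
  apply/permP => x; rewrite tauE // /tauf /cc c11 c12 (dec r1 x hr1).
  case: (F2P (coord x 1)) => ->; case: (F2P (coord x 2)) => ->;
    rewrite ?scale0r ?scale1r ?addr0 ?add0r.
  - rewrite -e1r; apply/rowP => j; rewrite !mxE. move: (x 0 j) (e1 0 j) (bt 0 j). f2s.
  - rewrite Ey; move: Ebt => h; apply/rowP => j; move/rowP/(_ j): h; rewrite !mxE;
    move: (x 0 j) (e1 0 j) (e2 0 j) (y 0 j) (bt 0 j); f2s.
  - rewrite r1e1; apply/rowP => j; rewrite !mxE; move: (x 0 j) (e1 0 j) (e2 0 j) (y 0 j) (bt 0 j); f2s.
  - have hz : r1 (e1 + e2) + bt = e2.
      by rewrite -shift // ey -Ey invo.
    move: hz; move: (r1 (e1 + e2)) => z hz.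
    apply/rowP => j; move/rowP/(_ j): hz; rewrite !mxE; move: (x 0 j) (e1 0 j) (e2 0 j) (bt 0 j) (z 0 j); f2s.
have r2E : r2 = tau bt e2.
  apply/permP => x; rewrite tauE // /tauf /cc c21 c22 (dec r2 x hr2).
  case: (F2P (coord x 1)) => ->; case: (F2P (coord x 2)) => ->;
    rewrite ?scale0r ?scale1r ?addr0 ?add0r.
  - by rewrite -e2r; apply/rowP => j; rewrite !mxE;
      move: (x 0 j) (e1 0 j) (e2 0 j) (y 0 j) (bt 0 j); f2s.
  - rewrite r2e2; apply/rowP => j; rewrite !mxE; move: (x 0 j) (e1 0 j) (e2 0 j) (y 0 j) (bt 0 j); f2s.
  - rewrite r21 Ey; move: Ebt => h; apply/rowP => j; move/rowP/(_ j): h; rewrite !mxE;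
    move: (x 0 j) (e1 0 j) (e2 0 j) (y 0 j) (bt 0 j); f2s.
  - have hz : r2 (e1 + e2) + bt = e1.
      by rewrite -shift // ey -Ey -r21 invo.
    move: hz; move: (r2 (e1 + e2)) => z hz.
    apply/rowP => j; move/rowP/(_ j): hz; rewrite !mxE; move: (x 0 j) (e1 0 j) (e2 0 j) (bt 0 j) (z 0 j); f2s.
have bt0 : bt != 0.
  apply/eqP => bt0; have : transl e1 \in sigmaW n.
    rewrite -hT inE; apply/andP; split; first exact: imset_f.
    suff -> : transl e1 = r1 by [].
    apply/permP => x; rewrite r1E tauE // transl_0 /tauf bt0 scaler0 addr0 //.
  case/imsetP => w /WsetP [hw1 _] /(congr1 (fun p : {perm V n} => p 0)).
  rewrite !transl_0 !add0r => ew; apply: (@crd_contra _ e1 w 1 ew) => //.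
exists bt; first by rewrite in_setD1 bt0.
apply/eqP; rewrite eq_sym eqEcard (card_reg hreg) (card_reg (Tb_regular hn hbt)) leqnn andbT.
rewrite gen_subG subUset; apply/andP; split.
  apply/subsetP => g; rewrite !inE => /orP [] /eqP ->.
    by rewrite (pi_tau _ hn) E1 -r1E.
  by rewrite (eps_tau _ hn) E2 -r2E.
apply/subsetP => g /imsetP [j]; rewrite inE => hj ->; exact/sW/evecW.
Qed.

Lemma coord_ord n (x : V n) (j : 'I_n) : coord x j.+1 = x 0 j.
Proof.
rewrite /coord; case: insubP => [j' _ hj|]; last by rewrite ltn_ord.
by congr (x 0 _); apply: val_inj.
Qed.

Lemma cardW m : #|Wset m.+2| = (2 ^ m)%N.
Proof.
have -> : Wset m.+2 = [set (row_mx (0 : 'rV['F_2]_2) u : V m.+2) | u : 'rV['F_2]_m].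
  apply/setP => w; apply/WsetP/imsetP.
  - have c1 := coord_ord w (@ord0 m.+1); have c2 := coord_ord w (@Ordinal m.+2 1 isT).
    move: c1 c2 => /= c1 c2 [h1 h2]; exists (rsubmx (w : 'rV_(2 + m))) => //.
    suff hl : lsubmx (w : 'rV_(2 + m)) = 0 by rewrite -hl hsubmxK.
    apply/rowP => i; rewrite !mxE; case: i => [[|[|k]] hk] //.
    + by rewrite -h1 c1; congr (w 0 _); apply: val_inj.
    + by rewrite -h2 c2; congr (w 0 _); apply: val_inj.
  - case=> u _ ->.
    pose o0 : 'I_m.+2 := ord0. pose o1 : 'I_m.+2 := @Ordinal m.+2 1 isT.
    have e0 : o0 = lshift m (@ord0 1) by apply: val_inj.
    have e1 : o1 = lshift m (@Ordinal 2 1 isT) by apply: val_inj.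
    rewrite (coord_ord _ o0) (coord_ord _ o1) e0 e1 !(row_mxEl (0 : 'rV['F_2]_2) u) !mxE.
    by [].
rewrite card_imset; last by move=> u v e; case: (@eq_row_mx _ 1 2 m _ _ _ _ e).
by rewrite cardT -cardE card_mx card_Fp // mul1n.
Qed.

Lemma Tb_inj n : (2 < n)%N -> {in Wset n :\ 0 &, injective (@T_ n)}.
Proof.
move=> hn b c; rewrite !in_setD1 => /andP [_ hb] /andP [_ hc] e.
have : pi_ b \in T_ c by rewrite -e; apply: mem_gen; rewrite !inE eqxx.
case/(memTb hn hc) => v ev.
have /WsetP [hc1 hc2] := hc.
have e0 : evec n 1 = v + (coord v 1 * coord v 2) *: c.
  rewrite -tau_at0 // -ev (pi_tau _ hn) tau_at0 // (ce11 hn) (ce12 hn).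
  by rewrite mulr0 scale0r addr0.
have v1 : coord v 1 = 1.
  have : coord (evec n 1) 1 = coord (v + (coord v 1 * coord v 2) *: c) 1 by rewrite -e0.
  by rewrite crdD crdZ hc1 mulr0 addr0 (ce11 hn) => <-.
have v2 : coord v 2 = 0.
  have : coord (evec n 1) 2 = coord (v + (coord v 1 * coord v 2) *: c) 2 by rewrite -e0.
  by rewrite crdD crdZ hc2 mulr0 addr0 (ce12 hn) => <-.
rewrite v1 v2 mulr0 scale0r addr0 in e0.
have := congr1 (fun p : {perm V n} => p (evec n 2)) ev.
rewrite /= (pi_tau _ hn) !tauE // -e0 /tauf /cc (ce11 hn) (ce12 hn) (ce21 hn) (ce22 hn).
by rewrite mul1r mul0r mulr0 !addr0 !scale1r => /addrI.
Qed.

Theorem mainTheorem8 (n : nat) (hn : (2 < n)%N) :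
  (forall R : {group {perm V n}},
     [&& 2.-abelem R, regular R & Tgrp n :&: R == sigmaW n]%g <->
     exists2 b : V n, b \in Wset n :\ 0%R & R :=: T_ b)
  /\ {in Wset n :\ 0%R &, injective (@T_ n)}
  /\ #|[set T_ b | b in Wset n :\ 0%R]| = (2 ^ (n - 2) - 1)%N.
Proof.
have hinj := Tb_inj hn.
split; [|split; first exact: hinj].
  move=> R; split; first exact: forward.
  case=> b hb ->.
  have hbW : b \in Wset n by move: hb; rewrite in_setD1 => /andP [].
  apply/and3P; split; [exact: Tb_abelem | exact: Tb_regular | exact: Tb_int].
rewrite card_in_imset //.
have hW : #|Wset n| = (2 ^ (n - 2))%N.
  by case: n {hinj} hn => [|[|m]] // _; rewrite cardW; congr (_ ^ _)%N; lia.
have h0 : 0 \in Wset n by apply/WsetP; rewrite !crd0.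
have h := cardsD1 0 (Wset n); rewrite h0 hW /= in h.
by rewrite h addnC addnK.
Qed.
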